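(* Let $(\Sigma,\theta)$ be a Noetherian space. The tree topology on the set $T(\Sigma)$ of finite trees over $\Sigma$ is the least fixed point of the map $K$ sending a topology $\tau$ on $T(\Sigma)$ to the topology generated by the sets $\uparrow_{\le_T}U\langle V\rangle$ with $U\in\theta$ and $V$ open in $T(\Sigma)^*$ for the subword topology induced by $\tau$; moreover $K$ is a topology expander.
   Context: A finite tree over $\Sigma$ is $a\langle t_1\cdots t_n\rangle$ with $a\in\Sigma$, $n\ge0$ and $t_i$ finite trees. $\le$ is the specialisation preorder of $\theta$. For a topological space $(A,\sigma)$, the subword topology on $A^*$ is generated by $A^*U_1A^*\cdots A^*U_nA^*$ with $U_i\in\sigma$; Higman's ordering $\le^*$ on $A^*$ relative to a preorder on $A$: $u\le^*w$ iff a strictly increasing map $h$ of positions satisfies $u_i\le w_{h(i)}$. Kruskal's embedding $\le_T$ on $T(\Sigma)$: $s\le_T t$ iff, writing $t=a\langle t_1\cdots t_n\rangle$, either $s\le_T t_i$ for some $i$, or $s=b\langle s_1\cdots s_m\rangle$ with $b\le a$ and $s_1\cdots s_m\le_T^* t_1\cdots t_n$. For $U\subseteq\Sigma$, $V\subseteq T(\Sigma)^*$, $U\langle V\rangle$ is the set of trees $a\langle w\rangle$ with $a\in U$, $w\in V$; $\diamond U\langle V\rangle$ is the set of trees having a subtree in $U\langle V\rangle$. The tree topology is the coarsest topology $\tau$ on $T(\Sigma)$ such that $\diamond U\langle V\rangle$ is open for every $U\in\theta$ and every $V$ open in the subword topology on $T(\Sigma)^*$ built from $\tau$. Noetherian: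 every subset compact. A refinement function is a map from topologies on a set $X$ to topologies on $X$, monotone and preserving Noetherianity; $\tau|_H$ is the topology generated by $\{U\cap H:U\in\tau\}$; a topology expander is a refinement function $R$ with $R(\tau)|_H=R(\tau|_H)|_H$ for all Noetherian $\tau\subseteq R(\tau)$ and all $H$ closed in $\tau$. *)

(* Defs.v *)
From Stdlib Require Import List.
Set Implicit Arguments.

Definition topo (X : Type) := (X -> Prop) -> Prop.

Definition set_eq {X} (A B : X -> Prop) := forall x, A x <-> B x.
Definition topo_le {X} (t1 t2 : topo X) := forall U, t1 U -> t2 U.
Definition topo_eq {X} (t1 t2 : topo X) := forall U, t1 U <-> t2 U.

Definition is_topology {X} (t : topo X) : Prop :=
  t (fun _ => True) /\
  (forall A B, t A -> t B -> t (fun x => A x /\ B x)) /\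
  (forall F : (X -> Prop) -> Prop, (forall U, F U -> t U) ->
      t (fun x => exists U, F U /\ U x)).

Definition gen {X} (G : (X -> Prop) -> Prop) : topo X :=
  fun U => forall t, is_topology t -> (forall V, G V -> t V) -> t U.

Definition compact_in {X} (t : topo X) (A : X -> Prop) : Prop :=
  forall F : (X -> Prop) -> Prop, (forall U, F U -> t U) ->
    (forall x, A x -> exists U, F U /\ U x) ->
    exists l : list (X -> Prop), (forall U, In U l -> F U) /\
      (forall x, A x -> exists U, In U l /\ U x).

Definition noetherian {X} (t : topo X) : Prop :=
  forall A : X -> Prop, compact_in t A.

Definition noetherian_space {X} (t : topo X) : Prop :=
  is_topology t /\ noetherian t.

(* specialisation preorder: x <= y iff x is in the closure of {y},
   i.e. every open set containing x contains y *)
Definition spec_le {X} (t : topo X) (x y : X) : Prop :=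
  forall U, t U -> U x -> U y.

Definition closed_in {X} (t : topo X) (H : X -> Prop) : Prop :=
  t (fun x => ~ H x).

(* tau|_H : topology (on X) generated by { U /\ H : U in tau } *)
Definition restr {X} (t : topo X) (H : X -> Prop) : topo X :=
  gen (fun W => exists U, t U /\ set_eq W (fun x => U x /\ H x)).

Definition refinement_function {X} (R : topo X -> topo X) : Prop :=
  (forall t, is_topology t -> is_topology (R t)) /\
  (forall t1 t2, is_topology t1 -> is_topology t2 ->
       topo_le t1 t2 -> topo_le (R t1) (R t2)) /\
  (forall t, is_topology t -> noetherian t -> noetherian (R t)).

Definition topology_expander {X} (R : topo X -> topo X) : Prop :=
  refinement_function R /\
  forall t H, is_topology t -> noetherian t -> topo_le t (R t) ->
    closed_in t H ->
    topo_eq (restr (R t) H) (restr (R (restr t H)) H).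

Definition least_fixed_point {X} (K : topo X -> topo X) (t : topo X) : Prop :=
  is_topology t /\ topo_eq (K t) t /\
  forall t', is_topology t' -> topo_eq (K t') t' -> topo_le t t'.

(* emb r u w : there is a strictly increasing h with r (u_i) (w_{h i}) *)
Inductive emb {A B : Type} (r : A -> B -> Prop) : list A -> list B -> Prop :=
| emb_nil : forall w, emb r nil w
| emb_cons : forall a u b w, r a b -> emb r u w -> emb r (a :: u) (b :: w)
| emb_skip : forall u b w, emb r u w -> emb r u (b :: w).

Definition higman {A} (le : A -> A -> Prop) : list A -> list A -> Prop := emb le.

(* A* U1 A* ... A* Un A* *)
Definition subword_basic {A} (Us : list (A -> Prop)) : list A -> Prop :=
  emb (fun (U : A -> Prop) a => U a) Us.

Definition subword_topology {A} (s : topo A) : topo (list A) :=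
  gen (fun W => exists Us : list (A -> Prop),
          (forall U, In U Us -> s U) /\ set_eq W (subword_basic Us)).

Inductive tree (S : Type) : Type := node : S -> list (tree S) -> tree S.
Arguments node {S}.

Inductive kruskal {S} (le : S -> S -> Prop) : tree S -> tree S -> Prop :=
| kr_sub : forall s a ts t, In t ts -> kruskal le s t -> kruskal le s (node a ts)
| kr_root : forall b ss a ts, le b a -> emb (kruskal le) ss ts ->
    kruskal le (node b ss) (node a ts).

Inductive subtree {S} : tree S -> tree S -> Prop :=
| st_refl : forall t, subtree t t
| st_child : forall s a ts t, In t ts -> subtree s t -> subtree s (node a ts).

Definition tree_UV {S} (U : S -> Prop) (V : list (tree S) -> Prop) : tree S -> Prop :=
  fun t => match t with node a w => U a /\ V w end.

Definition diamond {S} (P : tree S -> Prop) : tree S -> Prop :=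
  fun t => exists s, subtree s t /\ P s.

Definition up_kruskal {S} (theta : topo S) (P : tree S -> Prop) : tree S -> Prop :=
  fun t => exists s, P s /\ kruskal (spec_le theta) s t.

Definition tree_condition {S} (theta : topo S) (t : topo (tree S)) : Prop :=
  forall U V, theta U -> subword_topology t V -> t (diamond (tree_UV U V)).

Definition is_tree_topology {S} (theta : topo S) (t : topo (tree S)) : Prop :=
  is_topology t /\ tree_condition theta t /\
  forall t', is_topology t' -> tree_condition theta t' -> topo_le t t'.

Definition K_map {S} (theta : topo S) (t : topo (tree S)) : topo (tree S) :=
  gen (fun W => exists U V, theta U /\ subword_topology t V /\
          set_eq W (up_kruskal theta (tree_UV U V))).

(* Main.v *)
Require Import Defs.
From Stdlib Require Import List Classical ClassicalEpsilon FunctionalExtensionality PropExtensionality Lia Arith.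
Import ListNotations.

Lemma set_ext {X} (A B : X -> Prop) : set_eq A B -> A = B.
Proof. intro H. apply functional_extensionality; intro x. apply propositional_extensionality. apply H. Qed.

Lemma gen_top {X} (G : (X -> Prop) -> Prop) : is_topology (gen G).
Proof.
  split; [|split].
  - intros t Ht _. apply Ht.
  - intros A B HA HB t Ht HG. apply Ht; [apply HA|apply HB]; auto.
  - intros F HF t Ht HG. apply Ht. intros U HU. apply HF; auto.
Qed.

Lemma gen_min {X} (G : (X -> Prop) -> Prop) (t : topo X) :
  is_topology t -> (forall V, G V -> t V) -> topo_le (gen G) t.
Proof. intros Ht HG U HU. apply HU; auto. Qed.

Lemma gen_incl {X} (G : (X -> Prop) -> Prop) V : G V -> gen G V.
Proof. intros HV t _ HG. auto. Qed.

Lemma top_union {X} (t : topo X) (F : (X -> Prop) -> Prop) :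
  is_topology t -> (forall U, F U -> t U) -> t (fun x => exists U, F U /\ U x).
Proof. intros [_ [_ H]] HF. apply H; auto. Qed.

Lemma prop_topology {X} (P : (X -> Prop) -> Prop) :
  P (fun _ => True) ->
  (forall A B, P A -> P B -> P (fun x => A x /\ B x)) ->
  (forall F, (forall U, F U -> P U) -> P (fun x => exists U, F U /\ U x)) ->
  is_topology P.
Proof. intros; repeat split; auto. Qed.

Definition upc {X} (le : X -> X -> Prop) (U : X -> Prop) := forall x y, le x y -> U x -> U y.

Lemma upc_top {X} (le : X -> X -> Prop) : is_topology (upc le).
Proof.
  apply prop_topology.
  - intros x y _ _; auto.
  - intros A B HA HB x y Hl [Ha Hb]; split; eauto.
  - intros F HF x y Hl [U [HU Hx]]. exists U; split; auto. eapply HF; eauto.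
Qed.

Lemma agree_top {X} (t2 : topo X) (H : X -> Prop) : is_topology t2 ->
  is_topology (fun O => exists O', t2 O' /\ forall x, H x -> (O x <-> O' x)).
Proof.
  intros Ht. pose proof Ht as [HT [HI HU]]. apply prop_topology.
  - exists (fun _ => True); split; auto. tauto.
  - intros A B [A' [HA1 HA2]] [B' [HB1 HB2]].
    exists (fun x => A' x /\ B' x); split; auto.
    intros x Hx. rewrite HA2, HB2 by auto. tauto.
  - intros F HF.
    exists (fun x => exists U', (t2 U' /\ exists A, F A /\ forall y, H y -> (A y <-> U' y)) /\ U' x).
    split.
    + apply HU. intros U [? _]; auto.
    + intros x Hx; split.
      * intros [A [HA Ax]]. destruct (HF A HA) as [A' [HA1 HA2]].
        exists A'; split; [split; [auto| exists A; auto]|]. apply HA2; auto.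
      * intros [U' [[_ [A [HA HA2]]] Ux]]. exists A; split; auto. apply HA2; auto.
Qed.

Lemma emb_trans {A B C} (R1 : A -> B -> Prop) (R2 : B -> C -> Prop) (R3 : A -> C -> Prop) :
  forall b c, emb R2 b c -> forall a, emb R1 a b ->
  (forall x y z, In z c -> R1 x y -> R2 y z -> R3 x z) -> emb R3 a c.
Proof.
  intros b c H. induction H; intros a0 Ha Htr.
  - inversion Ha; constructor.
  - inversion Ha; subst.
    + constructor.
    + apply emb_cons. eapply Htr; eauto. left; auto.
      apply IHemb; auto. intros; eapply Htr; eauto. right; auto.
    + apply emb_skip. apply IHemb; auto. intros; eapply Htr; eauto. right; auto.
  - apply emb_skip. apply IHemb; auto. intros; eapply Htr; eauto. right; auto.
Qed.

Lemma emb_refl {A} (R : A -> A -> Prop) l : (forall x, In x l -> R x x) -> emb R l l.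
Proof. induction l; intros H; constructor; auto. apply H; left; auto. apply IHl; intros; apply H; right; auto. Qed.

Lemma emb_mono {A B} (R1 R2 : A -> B -> Prop) a b : emb R1 a b -> (forall x y, R1 x y -> R2 x y) -> emb R2 a b.
Proof. induction 1; intros; constructor; auto. Qed.

Lemma emb_In {A B} (R : A -> B -> Prop) u w : emb R u w -> forall x, In x u -> exists y, In y w /\ R x y.
Proof.
  induction 1; intros x Hx; simpl in *. contradiction.
  destruct Hx as [<-|Hx]. exists b; auto. destruct (IHemb x Hx) as [y [? ?]]; exists y; auto.
  destruct (IHemb x Hx) as [y [? ?]]; exists y; auto.
Qed.

Fixpoint tsize {L} (t : tree L) : nat :=
  match t with node _ ts => Datatypes.S (list_sum (map tsize ts)) end.

Lemma tsize_child {L} (a : L) ts t : In t ts -> tsize t < tsize (node a ts).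
Proof.
  simpl. intro H. induction ts; simpl in *. contradiction.
  destruct H as [<-|H]. lia. specialize (IHts H). lia.
Qed.

Section Kr.
Context {S : Type} (le : S -> S -> Prop).
Hypothesis le_refl : forall a, le a a.
Hypothesis le_trans : forall a b c, le a b -> le b c -> le a c.

Lemma kr_refl : forall t, kruskal le t t.
Proof.
  assert (forall n t, tsize t <= n -> kruskal le t t).
  { induction n; intros [a ts] Hs. simpl in Hs; lia.
    apply kr_root. auto. apply emb_refl. intros x Hx. apply IHn.
    pose proof (tsize_child a ts x Hx). lia. }
  intros t; eapply H; eauto.
Qed.

Lemma kr_child a ts c : In c ts -> kruskal le c (node a ts).
Proof. intros; eapply kr_sub; eauto. apply kr_refl. Qed.

Lemma kr_trans : forall t u, kruskal le t u -> forall s, kruskal le s t -> kruskal le s u.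
Proof.
  assert (forall n u, tsize u <= n -> forall t, kruskal le t u -> forall s, kruskal le s t -> kruskal le s u).
  { induction n; intros u Hu t Htu s Hst. destruct u; simpl in Hu; lia.
    inversion Htu; subst.
    - eapply kr_sub; eauto. eapply IHn; eauto. pose proof (tsize_child a ts t0 H). lia.
    - inversion Hst; subst.
      + match goal with H1 : In ?t0 ?ss, H2 : emb _ ?ss ts |- _ => destruct (emb_In _ _ _ H2 t0 H1) as [y [Hy Hty]] end.
        eapply kr_sub; eauto. eapply IHn; eauto. pose proof (tsize_child a ts y Hy). lia.
      + apply kr_root. eauto.
        eapply emb_trans; eauto. intros x y z Hz Hxy Hyz. eapply IHn; eauto.
        pose proof (tsize_child a ts z Hz). lia. }
  intros; eapply H; eauto.
Qed.

Lemma subtree_kr s t : subtree s t -> kruskal le s t.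
Proof. induction 1. apply kr_refl. eapply kr_sub; eauto. Qed.
End Kr.


Section Fix.
Context {S : Type} (theta : topo S).
Let kle := kruskal (spec_le theta).
Let K := K_map theta.

Lemma spec_refl a : spec_le theta a a. Proof. intros U _ H; auto. Qed.
Lemma spec_trans a b c : spec_le theta a b -> spec_le theta b c -> spec_le theta a c.
Proof. intros H1 H2 U HU Ha. apply H2; auto. apply H1; auto. Qed.

Lemma kle_refl t : kle t t. Proof. apply kr_refl, spec_refl. Qed.
Lemma kle_trans s t u : kle s t -> kle t u -> kle s u.
Proof. intros; eapply kr_trans; eauto. apply spec_trans. Qed.

Lemma sub_mono {A} (t1 t2 : topo A) : topo_le t1 t2 -> topo_le (subword_topology t1) (subword_topology t2).
Proof.
  intros H. apply gen_min. apply gen_top. intros V [Us [HUs HV]]. apply gen_incl.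
  exists Us; split; auto.
Qed.

Lemma K_mono (t1 t2 : topo (tree S)) : topo_le t1 t2 -> topo_le (K t1) (K t2).
Proof.
  intros H. apply gen_min. apply gen_top. intros W [U [V [HU [HV HW]]]]. apply gen_incl.
  exists U, V; split; [auto|split; [|auto]]. eapply sub_mono; eauto.
Qed.

Lemma K_top t : is_topology (K t). Proof. apply gen_top. Qed.

Lemma K_upc t : topo_le (K t) (upc kle).
Proof.
  apply gen_min. apply upc_top. intros W [U [V [HU [HV HW]]]] x y Hxy Hx.
  apply HW in Hx. apply HW. destruct Hx as [s [Hs Hsx]]. exists s; split; auto.
  eapply kle_trans; eauto.
Qed.



Lemma emb_upc_gen {A B C} (R1 : A -> B -> Prop) (R2 : B -> C -> Prop) (R3 : A -> C -> Prop) a b c :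
  emb R1 a b -> emb R2 b c -> (forall x y z, In x a -> R1 x y -> R2 y z -> R3 x z) -> emb R3 a c.
Proof.
  intros H1 H2 Htr. revert a H1 Htr. induction H2; intros a0 Ha Htr.
  - inversion Ha; constructor.
  - inversion Ha; subst.
    + constructor.
    + apply emb_cons. eapply Htr; eauto. left; auto.
      apply IHemb; auto. intros; eapply Htr; eauto. right; auto.
    + apply emb_skip. apply IHemb; auto.
  - apply emb_skip. apply IHemb; auto.
Qed.

Lemma emb_upc {A} (le : A -> A -> Prop) (Us : list (A -> Prop)) :
  (forall U, In U Us -> upc le U) -> upc (emb le) (subword_basic Us).
Proof.
  intros HU w w' Hww' Hw. unfold subword_basic in *.
  eapply emb_upc_gen; eauto. intros U x y HU1 Hx Hxy. eapply HU; eauto.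
Qed.

Lemma sub_upc {A} (le : A -> A -> Prop) (t : topo A) :
  topo_le t (upc le) -> topo_le (subword_topology t) (upc (emb le)).
Proof.
  intros H. apply gen_min. apply upc_top. intros V [Us [HUs HV]] w w' Hww' Hw.
  apply HV. apply HV in Hw. eapply emb_upc; eauto.
Qed.

Lemma diamond_eq U V : theta U -> upc (emb kle) V ->
  set_eq (diamond (tree_UV U V)) (up_kruskal theta (tree_UV U V)).
Proof.
  intros HU HV x; split.
  - intros [s [Hs Hs2]]. exists s; split; auto. apply subtree_kr; [apply spec_refl|auto].
  - intros [s [Hs Hsx]]. revert Hs. induction Hsx; intros Hs.
    + destruct (IHHsx Hs) as [y [Hy1 Hy2]]. exists y; split; auto. eapply st_child; eauto.
    + exists (node a ts); split; [constructor|]. destruct Hs as [Hb Hss]. split.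
      * apply H; auto.
      * eapply HV; eauto.
Qed.

Lemma fixed_tree_cond tau : is_topology tau -> topo_eq (K tau) tau -> tree_condition theta tau.
Proof.
  intros Ht Heq U V HU HV. apply (proj1 (Heq _)). apply gen_incl.
  exists U, V; split; [auto|split; [auto|]]. apply diamond_eq; auto.
  eapply sub_upc; eauto. intros O HO. apply (K_upc tau O). apply (proj2 (Heq _)); auto.
Qed.

Definition mu : topo (tree S) := fun O => forall t, is_topology t -> topo_le (K t) t -> t O.

Lemma mu_top : is_topology mu.
Proof.
  apply prop_topology.
  - intros t Ht _. apply Ht.
  - intros A B HA HB t Ht H. apply (proj1 (proj2 Ht)); [apply HA|apply HB]; auto.
  - intros F HF t Ht H. apply (proj2 (proj2 Ht)). intros; apply HF; auto.
Qed.

Lemma mu_below t : is_topology t -> topo_le (K t) t -> topo_le mu t.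
Proof. intros Ht H U HU. apply HU; auto. Qed.

Lemma mu_fixed : topo_eq (K mu) mu.
Proof.
  assert (H1 : topo_le (K mu) mu).
  { intros U HU t Ht H. apply H. eapply K_mono; [|exact HU]. apply mu_below; auto. }
  intros U; split. apply H1.
  intros HU. apply HU. apply K_top. apply K_mono; auto.
Qed.

Lemma mu_lfp : least_fixed_point K mu.
Proof.
  split; [apply mu_top|split; [apply mu_fixed|]].
  intros t' Ht' Heq. apply mu_below; auto. intros U HU; apply (proj1 (Heq U)); auto.
Qed.

Lemma lfp_below tau t : least_fixed_point K tau -> is_topology t -> topo_le (K t) t -> topo_le tau t.
Proof.
  intros [_ [_ Hl]] Ht H U HU. apply (mu_below t Ht H). apply Hl; auto. apply mu_top. apply mu_fixed.
Qed.

Lemma lfp_tree tau : least_fixed_point K tau -> is_tree_topology theta tau.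
Proof.
  intros Hl. pose proof Hl as [Ht [Heq _]].
  split; [auto|split; [apply fixed_tree_cond; auto|]].
  intros t' Ht' Hc.
  set (t'' := fun O => tau O /\ t' O).
  assert (Ht'' : is_topology t'').
  { apply prop_topology.
    - split; [apply (proj1 Ht)|apply (proj1 Ht')].
    - intros A B [? ?] [? ?]; split; [apply (proj1 (proj2 Ht))|apply (proj1 (proj2 Ht'))]; auto.
    - intros F HF; split; [apply (proj2 (proj2 Ht))|apply (proj2 (proj2 Ht'))]; intros; apply HF; auto. }
  assert (HK : topo_le (K t'') t'').
  { intros O HO. split.
    - apply (proj1 (Heq _)). eapply K_mono; [|exact HO]. intros ? [? ?]; auto.
    - revert O HO. apply gen_min; auto. intros W [U [V [HU [HV HW]]]].
      assert (HVt : subword_topology tau V) by (eapply sub_mono; [|exact HV]; intros ? [? ?]; auto).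
      assert (HVt' : subword_topology t' V) by (eapply sub_mono; [|exact HV]; intros ? [? ?]; auto).
      assert (W = diamond (tree_UV U V)).
      { apply set_ext. intros x. rewrite (HW x). symmetry. apply diamond_eq; auto.
        apply (sub_upc kle tau); [|exact HVt]. intros O HO. apply (K_upc tau O). apply (proj2 (Heq _)); auto. }
      subst W. apply Hc; auto. }
  intros U HU. apply (lfp_below tau t'' Hl Ht'' HK U HU).
Qed.

Lemma topo_ext {X} (t1 t2 : topo X) : topo_eq t1 t2 -> t1 = t2.
Proof. intros H. apply functional_extensionality; intros U. apply propositional_extensionality. apply H. Qed.

Lemma tree_lfp tau : is_tree_topology theta tau -> least_fixed_point K tau.
Proof.
  intros [Ht [Hc Hl]].
  pose proof (lfp_tree mu mu_lfp) as [Hm [Hmc Hml]].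
  assert (tau = mu).
  { apply topo_ext. intros U; split; intros HU. apply Hl; auto. apply Hml; auto. }
  subst; apply mu_lfp.
Qed.
End Fix.


Definition agreeT {X} (t2 : topo X) (H : X -> Prop) (O : X -> Prop) :=
  exists O', t2 O' /\ forall x, H x -> (O x <-> O' x).

Lemma agree_restr1 {X} (t : topo X) H U : t U -> agreeT (restr t H) H U.
Proof.
  intros HU. exists (fun x => U x /\ H x). split.
  - apply gen_incl. exists U; split; auto. intros x; tauto.
  - intros x Hx; tauto.
Qed.

Lemma agree_restr2 {X} (t : topo X) H U : is_topology t -> restr t H U -> agreeT t H U.
Proof.
  intros Ht HU. revert U HU. apply gen_min. apply agree_top; auto.
  intros W [U [HU HW]]. exists U; split; auto. intros x Hx. rewrite (HW x). tauto.
Qed.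

Lemma emb_agree {X} (H : X -> Prop) Us Us' :
  Forall2 (fun U U' => forall x, H x -> (U x <-> U' x)) Us Us' ->
  forall w, (forall y, In y w -> H y) -> (subword_basic Us w <-> subword_basic Us' w).
Proof.
  unfold subword_basic. intros HF w Hw. split; intros He.
  - revert Us' HF. induction He; intros Us' HF; inversion HF; subst.
    + constructor.
    + match goal with Hh : forall x, H x -> (_ <-> _) |- _ =>
        constructor; [apply Hh; [apply Hw; left; auto|assumption]|apply IHHe; auto; intros; apply Hw; right; auto] end.
    + constructor.
    + apply emb_skip. apply IHHe; auto. intros; apply Hw; right; auto.
  - revert Us HF. induction He; intros Us HF; inversion HF; subst.
    + constructor.
    + match goal with Hh : forall x, H x -> (_ <-> _) |- _ =>
        constructor; [apply Hh; [apply Hw; left; auto|assumption]|apply IHHe; auto; intros; apply Hw; right; auto] end.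
    + constructor.
    + apply emb_skip. apply IHHe; auto. intros; apply Hw; right; auto.
Qed.

Lemma agree_sub {X} (t1 t2 : topo X) (H : X -> Prop) : is_topology t2 ->
  (forall U, t1 U -> agreeT t2 H U) ->
  forall V, subword_topology t1 V -> agreeT (subword_topology t2) (fun w => forall y, In y w -> H y) V.
Proof.
  intros Ht2 Hel. apply gen_min. apply agree_top, gen_top.
  intros V [Us [HUs HV]].
  assert (exists Us', (forall U', In U' Us' -> t2 U') /\
            Forall2 (fun U U' => forall x, H x -> (U x <-> U' x)) Us Us') as [Us' [H1 H2]].
  { clear HV. induction Us as [|U Us IH].
    - exists []; split; [intros ? []|constructor].
    - destruct IH as [Us' [H1 H2]]; [intros; apply HUs; right; auto|].
      destruct (Hel U ltac:(apply HUs; left; auto)) as [U' [HU' HUU']].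
      exists (U' :: Us'); split. intros ? [<-|?]; auto. constructor; auto. }
  exists (subword_basic Us'); split.
  - apply gen_incl. exists Us'; split; auto. intros w; tauto.
  - intros w Hw. rewrite (HV w). apply (emb_agree H); auto.
Qed.

Section Restr.
Context {S : Type} (theta : topo S).
Let kle := kruskal (spec_le theta).

Lemma agree_K (t1 t2 : topo (tree S)) (H : tree S -> Prop) :
  (forall x s, H x -> kle s x -> H s) ->
  (forall V, subword_topology t1 V -> agreeT (subword_topology t2) (fun w => forall y, In y w -> H y) V) ->
  forall O, K_map theta t1 O -> agreeT (K_map theta t2) H O.
Proof.
  intros Hd Hw. apply gen_min. apply agree_top, gen_top.
  intros W [U [V [HU [HV HW]]]].
  destruct (Hw V HV) as [V' [HV' HVV']].
  exists (up_kruskal theta (tree_UV U V')). split.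
  - apply gen_incl. exists U, V'. split; [auto|split; [auto|]]. intros x; tauto.
  - intros x Hx. rewrite (HW x). split.
    + intros [s [Hs Hsx]]. exists s; split; auto. destruct s as [a ss]. destruct Hs as [Ha Hss].
      split; auto. apply HVV'; auto. intros y Hy. apply (Hd (node a ss)). eapply Hd; eauto.
      apply kr_child; auto. apply spec_refl.
    + intros [s [Hs Hsx]]. exists s; split; auto. destruct s as [a ss]. destruct Hs as [Ha Hss].
      split; auto. apply HVV'; auto. intros y Hy. apply (Hd (node a ss)). eapply Hd; eauto.
      apply kr_child; auto. apply spec_refl.
Qed.

Lemma restr_le {X} (t1 t2 : topo X) H :
  (forall O, t1 O -> agreeT t2 H O) -> topo_le (restr t1 H) (restr t2 H).
Proof.
  intros Ha. apply gen_min. apply gen_top. intros W [O [HO HW]].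
  destruct (Ha O HO) as [O' [HO' HOO']]. apply gen_incl. exists O'; split; auto.
  intros x. rewrite (HW x). split; intros [? ?]; split; auto; apply HOO'; auto.
Qed.

Lemma restr_prop (t : topo (tree S)) H : is_topology t -> topo_le t (K_map theta t) -> closed_in t H ->
  topo_eq (restr (K_map theta t) H) (restr (K_map theta (restr t H)) H).
Proof.
  intros Ht Htk Hc.
  assert (Hd : forall x s, H x -> kle s x -> H s).
  { intros x s Hx Hsx. apply NNPP. intros Hs. apply (K_upc theta t _ (Htk _ Hc) s x Hsx Hs); auto. }
  intros O; split; revert O; apply restr_le; apply agree_K; auto; apply agree_sub.
  - apply gen_top.
  - apply agree_restr1.
  - auto.
  - intros U HU. apply agree_restr2; auto.
Qed.
End Restr.


Definition sinc (f : nat -> nat) := forall n, f n < f (S n).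

Lemma sinc_lt f : sinc f -> forall i j, i < j -> f i < f j.
Proof.
  intros Hf i j Hij. induction Hij. apply Hf. specialize (Hf m). lia.
Qed.

Lemma sinc_ge f : sinc f -> forall n, f 0 + n <= f n.
Proof. intros Hf n. induction n. lia. specialize (Hf n). lia. Qed.

Definition wg {D} (valid : D -> Prop) (rel : D -> D -> Prop) :=
  forall f : nat -> D, (forall n, valid (f n)) -> exists i j, i < j /\ rel (f i) (f j).

Lemma choice_fun {A B} (P : A -> B -> Prop) : (forall a, exists b, P a b) -> exists f, forall a, P a (f a).
Proof.
  intros H. exists (fun a => proj1_sig (constructive_indefinite_description _ (H a))).
  intros a. exact (proj2_sig (constructive_indefinite_description _ (H a))).
Qed.

Definition inf (I : nat -> Prop) := forall N, exists n, N <= n /\ I n.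

Lemma enum_inf (P : nat -> Prop) : inf P -> exists g, sinc g /\ forall n, P (g n).
Proof.
  intros H. destruct (choice_fun _ H) as [nx Hnx].
  exists (fix g n := match n with 0 => nx 0 | S n => nx (S (g n)) end). split.
  - intros n. simpl. specialize (Hnx (S ((fix g n := match n with 0 => nx 0 | S n => nx (S (g n)) end) n))). lia.
  - intros [|n]; simpl; apply Hnx.
Qed.

Section RL.
Variables A B : nat -> nat -> Prop.

Definition Pspec (I : nat -> Prop) (p : nat * bool * (nat -> Prop)) :=
  I (fst (fst p)) /\ inf (snd p) /\
  forall j, snd p j -> I j /\ fst (fst p) < j /\
     (if snd (fst p) then ~ A (fst (fst p)) j else ~ B (fst (fst p)) j).

Lemma RL : (forall f, sinc f -> exists i j, i < j /\ A (f i) (f j)) ->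
           (forall f, sinc f -> exists i j, i < j /\ B (f i) (f j)) ->
           exists i j, i < j /\ A i j /\ B i j.
Proof.
  intros HA HB. apply NNPP; intro Hn.
  assert (Hc : forall i j, i < j -> ~ A i j \/ ~ B i j).
  { intros i j Hij. destruct (classic (A i j)); destruct (classic (B i j)); auto.
    exfalso; apply Hn; exists i, j; auto. }
  assert (step : forall I, inf I -> exists p, Pspec I p).
  { intros I HI. destruct (HI 0) as [k [_ Ik]].
    destruct (classic (inf (fun j => I j /\ k < j /\ ~ A k j))) as [Hinf|Hninf].
    - exists (k, true, fun j => I j /\ k < j /\ ~ A k j). unfold Pspec; simpl.
      split; [auto|split; [auto|]]. intros j [? [? ?]]; auto.
    - unfold inf in Hninf. apply not_all_ex_not in Hninf. destruct Hninf as [N HN].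
      exists (k, false, fun j => I j /\ k < j /\ N <= j). unfold Pspec; simpl.
      split; [auto|split].
      + intros M. destruct (HI (M + N + S k)) as [n [Hn1 Hn2]]. exists n. repeat split; auto; lia.
      + intros j [Ij [Hkj HNj]]. split; [auto|split; [auto|]].
        destruct (Hc k j Hkj) as [H1|H1]; auto.
        exfalso. apply HN. exists j; split; auto. }
  set (Fsig := fun s : {I | inf I} =>
         constructive_indefinite_description _ (step (proj1_sig s) (proj2_sig s))).
  assert (inf_T : inf (fun _ => True)) by (intros N; exists N; auto).
  set (st := fix st (n : nat) : {I | inf I} :=
         match n with 0 => exist _ (fun _ => True) inf_T
         | S n => exist _ (snd (proj1_sig (Fsig (st n)))) (proj1 (proj2 (proj2_sig (Fsig (st n))))) end).
  set (I := fun n => proj1_sig (st n)).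
  set (phi := fun n => fst (fst (proj1_sig (Fsig (st n))))).
  set (c := fun n => snd (fst (proj1_sig (Fsig (st n))))).
  assert (Ha : forall n, I n (phi n)).
  { intros n. exact (proj1 (proj2_sig (Fsig (st n)))). }
  assert (Hb : forall n j, I (S n) j -> I n j /\ phi n < j /\ (if c n then ~ A (phi n) j else ~ B (phi n) j)).
  { intros n j Hj. exact (proj2 (proj2 (proj2_sig (Fsig (st n)))) j Hj). }
  assert (Hmono : forall m n j, I (n + m) j -> I n j).
  { induction m; intros n j Hj. rewrite Nat.add_0_r in Hj; auto.
    apply IHm. rewrite Nat.add_succ_r in Hj. apply Hb; auto. }
  assert (Hcol : forall l l', l < l' -> phi l < phi l' /\ (if c l then ~ A (phi l) (phi l') else ~ B (phi l) (phi l'))).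
  { intros l l' Hll'. apply Hb. apply (Hmono (l' - S l)). replace (S l + (l' - S l)) with l' by lia. apply Ha. }
  assert (Hs : sinc phi) by (intros n; apply Hcol; lia).
  destruct (classic (inf (fun l => c l = true))) as [Hi|Hni].
  - destruct (enum_inf _ Hi) as [g [Hg Hgc]].
    destruct (HA (fun n => phi (g n))) as [i [j [Hij HAij]]].
    + intros n. apply (sinc_lt phi Hs). apply Hg.
    + destruct (Hcol (g i) (g j)) as [_ Hc2]. apply (sinc_lt g Hg); auto.
      rewrite (Hgc i) in Hc2. contradiction.
  - unfold inf in Hni. apply not_all_ex_not in Hni. destruct Hni as [N HN].
    destruct (HB (fun n => phi (N + n))) as [i [j [Hij HBij]]].
    + intros n. apply (sinc_lt phi Hs). lia.
    + destruct (Hcol (N + i) (N + j)) as [_ Hc2]. lia.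
      destruct (c (N + i)) eqn:E.
      * exfalso. apply HN. exists (N + i). split; auto. lia.
      * contradiction.
Qed.
End RL.


Section MB.
Variables (D : Type) (valid : D -> Prop) (rel : D -> D -> Prop) (m : D -> nat).

Definition bad (h : nat -> D) := (forall n, valid (h n)) /\ forall i j, i < j -> ~ rel (h i) (h j).

Lemma min_exists (P : D -> Prop) : (exists d, P d) -> exists d, P d /\ forall d', P d' -> m d <= m d'.
Proof.
  intros [d Hd]. apply NNPP; intro Hn.
  assert (forall n d, m d <= n -> ~ P d).
  { induction n; intros d' Hd' Hp; apply Hn; exists d'; split; auto; intros d'' Hp'.
    - destruct (le_lt_dec (m d') (m d'')); auto. lia.
    - destruct (le_lt_dec (m d') (m d'')); auto. exfalso. eapply IHn; eauto. lia. }
  eapply H; eauto.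
Qed.

Variable d0 : D.
Definition ext (l : list D) (d : D) :=
  exists h, bad h /\ (forall k, k < length l -> h k = nth k l d0) /\ h (length l) = d.
Definition minext l d := ext l d /\ forall d', ext l d' -> m d <= m d'.
Definition pick l := epsilon (inhabits d0) (minext l).
Fixpoint Gs n := match n with 0 => [] | S n => Gs n ++ [pick (Gs n)] end.

Lemma Gs_len n : length (Gs n) = n.
Proof. induction n; simpl; auto. rewrite length_app, IHn; simpl; lia. Qed.

Lemma MB : (exists f0, bad f0 /\ f0 0 = d0) ->
  exists g, bad g /\ forall n h, bad h -> (forall k, k < n -> h k = g k) -> m (g n) <= m (h n).
Proof.
  intros [f0 [Hf0 Hd0]].
  assert (Hext : forall n, exists d, ext (Gs n) d).
  { induction n.
    - exists (f0 0), f0. split; auto. split; auto. simpl; intros; lia.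
    - destruct (min_exists _ IHn) as [d Hd].
      assert (Hm : minext (Gs n) (pick (Gs n))) by (unfold pick; apply epsilon_spec; exists d; exact Hd).
      destruct Hm as [[h [Hh [Hh1 Hh2]]] _].
      exists (h (S n)), h. split; auto. rewrite Gs_len in *. split; auto.
      intros k Hk. simpl. destruct (Nat.eq_dec k n).
      + subst. rewrite app_nth2; rewrite Gs_len; auto. rewrite Nat.sub_diag. simpl; auto.
      + rewrite app_nth1; [|rewrite Gs_len; lia]. apply Hh1. lia. }
  assert (Hmin : forall n, minext (Gs n) (pick (Gs n))).
  { intros n. destruct (min_exists _ (Hext n)) as [d Hd]. unfold pick; apply epsilon_spec; exists d; exact Hd. }
  set (g := fun n => pick (Gs n)).
  assert (Hnth : forall n k, k < n -> nth k (Gs n) d0 = g k).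
  { induction n; intros k Hk. lia. simpl. destruct (Nat.eq_dec k n).
    + subst. rewrite app_nth2; rewrite Gs_len; auto. rewrite Nat.sub_diag. simpl; auto.
    + rewrite app_nth1; [|rewrite Gs_len; lia]. apply IHn. lia. }
  exists g. split; [split|].
  - intros n. destruct (Hmin n) as [[h [[Hv _] [_ Hh]]] _]. rewrite Gs_len in Hh. unfold g; rewrite <- Hh; auto.
  - intros i j Hij. destruct (Hmin j) as [[h [[_ Hb] [Hh1 Hh]]] _]. rewrite Gs_len in *.
    rewrite <- (Hnth j i Hij). unfold g; rewrite <- Hh. rewrite <- Hh1; auto.
  - intros n h Hh Hagree. destruct (Hmin n) as [_ Hm]. apply Hm.
    exists h. split; auto. rewrite Gs_len. split; auto.
    intros k Hk. rewrite Hnth; auto.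
Qed.
End MB.
Arguments bad {D}.

Lemma MB' {D} (valid : D -> Prop) rel (m : D -> nat) : ~ wg valid rel ->
  exists g, bad valid rel g /\ forall n h, bad valid rel h -> (forall k, k < n -> h k = g k) -> m (g n) <= m (h n).
Proof.
  intros Hn. unfold wg in Hn. apply not_all_ex_not in Hn. destruct Hn as [f0 Hf0].
  apply imply_to_and in Hf0. destruct Hf0 as [Hv Hr].
  apply (MB D valid rel m (f0 0)). exists f0. split; auto. split; auto.
  intros i j Hij Hrel. apply Hr. exists i, j; auto.
Qed.


Lemma GL {D E} (valid : D -> Prop) (rel : D -> D -> Prop) (m : D -> nat)
  (validE : E -> Prop) (relE : E -> E -> Prop) (Dec : D -> E -> D -> Prop) :
  wg validE relE ->
  (forall d, valid d -> (forall d', rel d d') \/ exists hd tl, Dec d hd tl) ->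
  (forall d hd tl, Dec d hd tl -> validE hd /\ valid tl /\ m tl < m d /\ forall d'', rel d'' tl -> rel d'' d) ->
  (forall d hd tl d' hd' tl', Dec d hd tl -> Dec d' hd' tl' -> relE hd hd' -> rel tl tl' -> rel d d') ->
  wg valid rel.
Proof.
  intros HE H1 H2 H3. apply NNPP; intro Hn.
  destruct (MB' valid rel m Hn) as [g [[Hgv Hgb] Hgm]].
  assert (Hdec : forall n, exists p, Dec (g n) (fst p) (snd p)).
  { intros n. destruct (H1 (g n) (Hgv n)) as [Hu|[hd [tl Hd]]].
    - exfalso. apply (Hgb n (S n)); auto.
    - exists (hd, tl); auto. }
  destruct (choice_fun _ Hdec) as [c Hc].
  destruct (RL (fun i j => relE (fst (c i)) (fst (c j))) (fun i j => rel (snd (c i)) (snd (c j))))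
    as [i [j [Hij [HA HB]]]].
  - intros f Hf. destruct (HE (fun n => fst (c (f n)))) as [i [j [Hij Hr]]].
    + intros n. apply (H2 _ _ _ (Hc (f n))).
    + exists i, j; auto.
  - intros f Hf. apply NNPP; intro Hnb.
    set (f0 := f 0).
    set (h := fun k => if k <? f0 then g k else snd (c (f (k - f0)))).
    assert (Hhb : bad valid rel h).
    { split.
      - intros k. unfold h. destruct (k <? f0); auto. apply (H2 _ _ _ (Hc _)).
      - intros a b Hab. unfold h.
        destruct (a <? f0) eqn:Ea; destruct (b <? f0) eqn:Eb;
          apply Nat.ltb_lt in Ea || apply Nat.ltb_ge in Ea;
          apply Nat.ltb_lt in Eb || apply Nat.ltb_ge in Eb; try lia.
        + apply Hgb; auto.
        + intros Hr. apply (Hgb a (f (b - f0))).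
          pose proof (sinc_ge f Hf (b - f0)). unfold f0 in *. lia.
          apply (H2 _ _ _ (Hc _)); auto.
        + intros Hr. apply Hnb. exists (a - f0), (b - f0). split; auto. lia. }
    assert (Hm := Hgm f0 h Hhb).
    assert (Hm' : m (g f0) <= m (h f0)).
    { apply Hm. intros k Hk. unfold h. apply Nat.ltb_lt in Hk. rewrite Hk. auto. }
    unfold h in Hm'. rewrite Nat.ltb_irrefl, Nat.sub_diag in Hm'.
    destruct (H2 _ _ _ (Hc (f 0))) as [_ [_ [Hlt _]]]. unfold f0 in *. lia.
  - apply (Hgb i j Hij). eapply H3; eauto.
Qed.

Definition sgood {X} (G : (X -> Prop) -> Prop) :=
  wg (fun p : X * (X -> Prop) => G (snd p) /\ snd p (fst p)) (fun p q => snd p (fst q)).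

Definition fgood {X} (G : (X -> Prop) -> Prop) :=
  wg (fun p : X * list (X -> Prop) => (forall U, In U (snd p) -> G U) /\ (forall U, In U (snd p) -> U (fst p)))
     (fun p q => forall U, In U (snd p) -> U (fst q)).

Lemma fin_good {X} (G : (X -> Prop) -> Prop) : sgood G -> fgood G.
Proof.
  intros HG. unfold fgood.
  apply (GL _ _ (fun p => length (snd p)) _ _
     (fun d hd tl => ((forall U, In U (snd d) -> G U) /\ (forall U, In U (snd d) -> U (fst d))) /\
         snd d = snd hd :: snd tl /\ fst tl = fst d /\ fst hd = fst d) HG).
  - intros [x l] [Hv1 Hv2]. destruct l as [|U r].
    + left. intros d' U [].
    + right. exists (x, U), (x, r). simpl; auto.
  - intros [x l] [y U] [z r] [[Hv1 Hv2] [E1 [E2 E3]]]; simpl in *; subst.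
    split; [split; [apply Hv1; left; auto|apply Hv2; left; auto]|].
    split; [split; intros; [apply Hv1|apply Hv2]; right; auto|].
    split; [simpl; lia|]. auto.
  - intros [x l] [x1 U] [x2 r] [x' l'] [y1 U'] [y2 r'] [_ [E1 [E2 E3]]] [_ [F1 [F2 F3]]] HU Hr;
      simpl in *; subst. intros W [<-|HW]; [auto|apply Hr; exact HW].
Qed.

Lemma emb_dec {X} (U : X -> Prop) R w : subword_basic (U :: R) w ->
  exists x y, U x /\ subword_basic R y /\ (forall Vs, subword_basic Vs y -> subword_basic Vs w) /\
    (forall U' R', U' x -> subword_basic R' y -> subword_basic (U' :: R') w).
Proof.
  unfold subword_basic. induction w as [|a w IH]; intros H; inversion H; subst.
  - exists a, w. split; auto. split; auto. split.
    + intros; apply emb_skip; auto.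
    + intros; apply emb_cons; auto.
  - destruct (IH H2) as [x [y [H1 [H3 [H4 H5]]]]]. exists x, y. split; auto. split; auto. split.
    + intros; apply emb_skip; auto.
    + intros; apply emb_skip; auto.
Qed.

Lemma higman_good {X} (t : topo X) : sgood t ->
  wg (fun p : list X * list (X -> Prop) => (forall U, In U (snd p) -> t U) /\ subword_basic (snd p) (fst p))
     (fun p q => subword_basic (snd p) (fst q)).
Proof.
  intros HG.
  apply (GL _ _ (fun p => length (snd p)) _ _
     (fun d hd tl => ((forall U, In U (snd d) -> t U) /\ subword_basic (snd d) (fst d)) /\
         snd d = snd hd :: snd tl /\ snd hd (fst hd) /\ subword_basic (snd tl) (fst tl) /\
         (forall Vs, subword_basic Vs (fst tl) -> subword_basic Vs (fst d)) /\
         (forall U' R', U' (fst hd) -> subword_basic R' (fst tl) -> subword_basic (U' :: R') (fst d))) HG).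
  - intros [w l] [Hv1 Hv2]. destruct l as [|U r].
    + left. intros d'. constructor.
    + right. destruct (emb_dec U r w Hv2) as [x [y [H1 [H2 [H3 H4]]]]].
      exists (x, U), (y, r). simpl. split; auto.
  - intros [w l] [x U] [y r] [[Hv1 Hv2] [E1 [E2 [E3 [E4 E5]]]]]; simpl in *; subst.
    split; [split; [apply Hv1; left; auto|auto]|].
    split; [split; [intros; apply Hv1; right; auto|auto]|].
    split; [simpl; lia|]. intros d'' Hd. apply E4; auto.
  - intros [w l] [x U] [y r] [w' l'] [x' U'] [y' r'] [_ [E1 [E2 [E3 [E4 E5]]]]] [_ [F1 [F2 [F3 [F4 F5]]]]] HU Hr;
      simpl in *; subst. apply F5; auto.
Qed.


Lemma noeth_sgood {X} (t : topo X) : noetherian t -> sgood t.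
Proof.
  intros Hn f Hf.
  destruct (Hn (fun y => exists n, y = fst (f n)) (fun U => exists n, U = snd (f n))) as [l [Hl1 Hl2]].
  - intros U [n ->]. apply Hf.
  - intros y [n ->]. exists (snd (f n)). split; [exists n; auto|apply Hf].
  - assert (exists N, forall U, In U l -> exists n, n < N /\ U = snd (f n)) as [N HN].
    { clear Hl2. induction l as [|U l IH].
      - exists 0. intros U [].
      - destruct IH as [N HN]. intros; apply Hl1; right; auto.
        destruct (Hl1 U (or_introl eq_refl)) as [n Hn'].
        exists (S (N + n)). intros V [<-|HV].
        + exists n; split; auto; lia.
        + destruct (HN V HV) as [k [Hk ->]]. exists k; split; auto; lia. }
    destruct (Hl2 (fst (f N)) (ex_intro _ N eq_refl)) as [U [HU HUx]].
    destruct (HN U HU) as [n [Hn1 ->]]. exists n, N; auto.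
Qed.

Lemma gen_shrink {X} (G : (X -> Prop) -> Prop) O : gen G O ->
  forall x, O x -> exists l, (forall U, In U l -> G U) /\ (forall U, In U l -> U x) /\
                          forall y, (forall U, In U l -> U y) -> O y.
Proof.
  intros HO. revert O HO.
  refine (gen_min G (fun O => forall x, O x -> exists l, (forall U, In U l -> G U) /\ (forall U, In U l -> U x) /\
                          forall y, (forall U, In U l -> U y) -> O y) _ _).
  - apply prop_topology.
    + intros x _. exists []. split; [intros ? []|split; [intros ? []|auto]].
    + intros A B HA HB x [Ax Bx]. destruct (HA x Ax) as [l1 [H1 [H2 H3]]].
      destruct (HB x Bx) as [l2 [H4 [H5 H6]]]. exists (l1 ++ l2).
      split; [|split].
      * intros U HU; apply in_app_iff in HU; destruct HU; [apply (H1 U)|apply (H4 U)]; auto.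
      * intros U HU; apply in_app_iff in HU; destruct HU; [first [apply (H1 U)|apply (H2 U)] | first [apply (H4 U)|apply (H5 U)]]; auto.
      * intros y Hy. split; [apply H3|apply H6]; intros U HU; apply Hy; apply in_app_iff; auto.
    + intros F HF x [U [HU Ux]]. destruct (HF U HU x Ux) as [l [H1 [H2 H3]]].
      exists l. split; auto. split; auto. intros y Hy. exists U; split; auto.
  - intros V HV x Vx. exists [V]. split; [|split].
    + intros U [<-|[]]; auto.
    + intros U [<-|[]]; exact Vx.
    + intros y Hy. apply Hy; left; auto.
Qed.

Lemma fgood_sgood_gen {X} (G : (X -> Prop) -> Prop) : fgood G -> sgood (gen G).
Proof.
  intros HG f Hf.
  assert (Hs : forall n, exists l, (forall U, In U l -> G U) /\ (forall U, In U l -> U (fst (f n))) /\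
                          forall y, (forall U, In U l -> U y) -> snd (f n) y).
  { intros n. destruct (Hf n). apply gen_shrink; auto. }
  destruct (choice_fun _ Hs) as [L HL].
  destruct (HG (fun n => (fst (f n), L n))) as [i [j [Hij Hr]]].
  - intros n; simpl. split; apply HL.
  - exists i, j. split; auto. apply HL. exact Hr.
Qed.

Lemma fgood_noeth {X} (G : (X -> Prop) -> Prop) : fgood G -> noetherian (gen G).
Proof.
  intros HG. pose proof (fgood_sgood_gen G HG) as HS.
  intros A F HF Hcov. apply NNPP; intros Hn.
  assert (Hnl : forall l, (forall U, In U l -> F U) -> exists x, A x /\ forall U, In U l -> ~ U x).
  { intros l Hl. apply NNPP; intros Hx. apply Hn. exists l. split; auto.
    intros x Ax. apply NNPP; intros Hx2. apply Hx. exists x. split; auto.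
    intros U HU Ux. apply Hx2. exists U; auto. }
  destruct (Hnl [] (fun U H => match H with end)) as [x0 [Ax0 _]].
  assert (Hstep : forall l, exists p : X * (X -> Prop), (forall U, In U l -> F U) ->
            A (fst p) /\ (forall U, In U l -> ~ U (fst p)) /\ F (snd p) /\ snd p (fst p)).
  { intros l. destruct (classic (forall U, In U l -> F U)) as [Hl|Hl].
    - destruct (Hnl l Hl) as [x [Ax Hx]]. destruct (Hcov x Ax) as [U [FU Ux]].
      exists (x, U). intros _. simpl. auto.
    - exists (x0, fun _ => True). intros H; contradiction. }
  destruct (choice_fun _ Hstep) as [c Hc].
  set (L := fix L n := match n with 0 => [] | S n => snd (c (L n)) :: L n end).
  assert (HL : forall n U, In U (L n) -> F U).
  { induction n; simpl; intros U HU. destruct HU. destruct HU as [<-|HU]; auto.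
    apply (Hc (L n) (IHn)). }
  assert (HLin : forall i j, i < j -> In (snd (c (L i))) (L j)).
  { intros i j Hij. induction Hij; simpl; auto. }
  destruct (HS (fun n => c (L n))) as [i [j [Hij Hr]]].
  - intros n. destruct (Hc (L n) (HL n)) as [_ [_ [H1 H2]]]. split; auto.
  - destruct (Hc (L j) (HL j)) as [_ [H1 _]]. apply (H1 _ (HLin i j Hij)). exact Hr.
Qed.

Definition EG {X} (t : topo X) : (list X -> Prop) -> Prop :=
  fun W => exists Us, (forall U, In U Us -> t U) /\ set_eq W (subword_basic Us).

Lemma EG_good {X} (t : topo X) : noetherian t -> sgood (EG t).
Proof.
  intros Hn f Hf.
  assert (Hs : forall n, exists Us, (forall U, In U Us -> t U) /\ set_eq (snd (f n)) (subword_basic Us)).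
  { intros n; apply Hf. }
  destruct (choice_fun _ Hs) as [Us HUs].
  destruct (higman_good t (noeth_sgood t Hn) (fun n => (fst (f n), Us n))) as [i [j [Hij Hr]]].
  - intros n; simpl. split; [apply HUs|]. apply (HUs n). apply Hf.
  - exists i, j; split; auto. apply (HUs i). exact Hr.
Qed.

Lemma sub_good {X} (t : topo X) : noetherian t -> sgood (subword_topology t).
Proof. intros Hn. apply fgood_sgood_gen, fin_good, EG_good; auto. Qed.


Lemma K_noeth {S} (theta : topo S) (t : topo (tree S)) :
  noetherian theta -> noetherian t -> noetherian (K_map theta t).
Proof.
  intros Hth Ht. apply fgood_noeth, fin_good.
  intros f Hf.
  assert (Hs : forall n, exists q : (S -> Prop) * (list (tree S) -> Prop) * (S * list (tree S)),
     theta (fst (fst q)) /\ subword_topology t (snd (fst q)) /\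
     set_eq (snd (f n)) (up_kruskal theta (tree_UV (fst (fst q)) (snd (fst q)))) /\
     fst (fst q) (fst (snd q)) /\ snd (fst q) (snd (snd q)) /\
     kruskal (spec_le theta) (node (fst (snd q)) (snd (snd q))) (fst (f n))).
  { intros n. destruct (Hf n) as [[U [V [HU [HV HW]]]] Hx].
    apply HW in Hx. destruct Hx as [[a w] [[Ha Hw] Hk]].
    exists (U, V, (a, w)). simpl. auto 10. }
  destruct (choice_fun _ Hs) as [q Hq].
  destruct (RL (fun i j => fst (fst (q i)) (fst (snd (q j))))
               (fun i j => snd (fst (q i)) (snd (snd (q j))))) as [i [j [Hij [HA HB]]]].
  - intros g Hg. destruct (noeth_sgood theta Hth (fun n => (fst (snd (q (g n))), fst (fst (q (g n))))))
      as [i [j [Hij Hr]]].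
    + intros n. simpl. destruct (Hq (g n)) as [H1 [_ [_ [H4 _]]]]. auto.
    + exists i, j; auto.
  - intros g Hg. destruct (sub_good t Ht (fun n => (snd (snd (q (g n))), snd (fst (q (g n))))))
      as [i [j [Hij Hr]]].
    + intros n. simpl. destruct (Hq (g n)) as [_ [H2 [_ [_ [H5 _]]]]]. auto.
    + exists i, j; auto.
  - exists i, j. split; auto. destruct (Hq i) as [_ [_ [H3 _]]]. apply H3.
    destruct (Hq j) as [_ [_ [_ [_ [_ H6]]]]].
    exists (node (fst (snd (q j))) (snd (snd (q j)))). split; auto. simpl. auto.
Qed.

Theorem mainTheorem14 (Sigma : Type) (theta : topo Sigma) :
  noetherian_space theta ->
  (exists tau, is_tree_topology theta tau) /\
  (forall tau, is_tree_topology theta tau <-> least_fixed_point (K_map theta) tau) /\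
  topology_expander (K_map theta).
Proof.
  intros [Hth Hn]. split; [|split].
  - exists (mu theta). apply lfp_tree, mu_lfp.
  - intros tau; split; [apply tree_lfp|apply lfp_tree].
  - split.
    + split; [|split].
      * intros t _. apply K_top.
      * intros t1 t2 _ _ H. apply K_mono; auto.
      * intros t _ Ht. apply K_noeth; auto.
    + intros t H Ht _ Htk Hc. apply restr_prop; auto.
Qed.
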